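(* Let $n\ge 2$, $N=\{1,\dots,n\}$, for each $i\in N$ let $A_i$ be a nonempty finite set, $A=\prod_{i\in N}A_i$, and let $u_i:A\to\mathbb{R}$ for $i\in N$, with $u(a)=(u_i(a))_{i\in N}$. Then for every $\delta\in(0,1]$ and every $T\in\mathbb{N}$, $$F(\delta,T)=\operatorname{co}\left(\{v(a^{[n]}) : a^{[n]}\in A^n\}\right),$$ where $F(\delta,T)$ and $v$ are as defined in the context.
   Context: For $a^{[nT]}=(a^1,\dots,a^{nT})\in A^{nT}$ extend the indices periodically by $a^s=a^{s-nT}$ for $s\ge nT+1$, and define for $i\in N$ $$U_i(a^{[nT]})=\frac{1}{\sum_{k=1}^{nT}\delta^{k-1}}\sum_{k=1}^{nT}\delta^{k-1}u_i\big(a^{(i-1)T+k}\big),$$ and $U(a^{[nT]})=(U_i(a^{[nT]}))_{i\in N}\in\mathbb{R}^n$. Let $F(\delta,T)=\operatorname{co}\left(\bigcup_{a^{[nT]}\in A^{nT}}\{U(a^{[nT]})\}\right)$, where $\operatorname{co}$ denotes convex hull. For $a^{[n]}=(a^1,\dots,a^n)\in A^n$ extend indices by $a^s=a^{s-n}$ for $s\ge n+1$ and define $$v_i(a^{[n]})=\frac{1}{\sum_{k=1}^n\delta^{(k-1)T}}\sum_{k=1}^n\delta^{(k-1)T}u_i\big(a^{i+k-1}\big),\qquad v(a^{[n]})=(v_i(a^{[n]}))_{i\in N}.$$ (Interpretation: $F(\delta,T)$ is the set of periodic feasible payoffs of the overlapping-generations repeated game in which player $i$ of each generation lives $nT$ periods,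 entering $T$ periods after player $i-1$, with common discount factor $\delta$.) *)

(* Defs.v *)
From HB Require Import structures.
From mathcomp Require Import all_boot all_order all_algebra.
From mathcomp Require Import reals.
Set Implicit Arguments. Unset Strict Implicit. Unset Printing Implicit Defensive.
Import Order.TTheory GRing.Theory Num.Theory.
Local Open Scope ring_scope.

(* Players are N = 'I_n (0-indexed: player i of the paper is i.-1 here).
   A pure action profile is an element of {dffun forall i : 'I_n, A i}. *)
Definition profile (n : nat) (A : 'I_n -> finType) := {dffun forall i : 'I_n, A i}.

Section Defs.
Variables (R : realType) (n : nat) (A : 'I_n -> finType).
Variable (u : 'I_n -> profile A -> R).

(* payoff of player i at the (0-indexed) period s of the periodic extension
   of a finite sequence f : 'I_m -> profile A  (the index s is taken mod m;
   the default 0 is never used when m > 0). *)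
Definition upay (m : nat) (f : {ffun 'I_m -> profile A}) (i : 'I_n) (s : nat) : R :=
  oapp (fun j : 'I_m => u i (f j)) 0 (insub (s %% m)%N).

(* U_i(a^[nT]) :  paper index (i-1)T + k, k = 1..nT  becomes
   0-indexed i*T + k, k = 0..nT-1. *)
Definition Ui (delta : R) (T : nat) (a : {ffun 'I_(n * T) -> profile A}) (i : 'I_n) : R :=
  (\sum_(k < n * T) delta ^+ k)^-1 *
  \sum_(k < n * T) delta ^+ k * upay a i (i * T + k)%N.

Definition Uvec (delta : R) (T : nat) (a : {ffun 'I_(n * T) -> profile A}) : 'rV[R]_n :=
  \row_i Ui delta a i.

(* v_i(a^[n]) :  paper index i + k - 1, k = 1..n, weight delta^((k-1)T)
   becomes 0-indexed i + k, k = 0..n-1, weight delta^(k T). *)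
Definition vi (delta : R) (T : nat) (a : {ffun 'I_n -> profile A}) (i : 'I_n) : R :=
  (\sum_(k < n) delta ^+ (k * T))^-1 *
  \sum_(k < n) delta ^+ (k * T) * upay a i (i + k)%N.

Definition vvec (delta : R) (T : nat) (a : {ffun 'I_n -> profile A}) : 'rV[R]_n :=
  \row_i vi delta T a i.

End Defs.

Definition conv (R : realType) (n : nat) (S : 'rV[R]_n -> Prop) (x : 'rV[R]_n) : Prop :=
  exists (m : nat) (w : 'I_m -> R) (p : 'I_m -> 'rV[R]_n),
    [/\ forall j, 0 <= w j, \sum_j w j = 1, forall j, S (p j)
      & x = \sum_j w j *: p j].

Definition Fset (R : realType) (n : nat) (A : 'I_n -> finType)
  (u : 'I_n -> profile A -> R) (delta : R) (T : nat) : 'rV[R]_n -> Prop :=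
  conv (fun y => exists a : {ffun 'I_(n * T) -> profile A}, y = Uvec u delta a).

(* Main.v *)
Require Import Defs.
From HB Require Import structures.
From mathcomp Require Import all_boot all_order all_algebra.
From mathcomp Require Import reals.
From mathcomp Require Import zify ring lra.
Import Order.TTheory GRing.Theory Num.Theory.
Local Open Scope ring_scope.

Section Aux.
Variable R : realType.

Lemma sum_split (N T : nat) (f : nat -> R) :
  \sum_(k < N * T) f k = \sum_(k' < N) \sum_(r < T) f (k' * T + r)%N.
Proof.
elim: N => [|N IH]; first by rewrite mul0n !big_ord0.
rewrite big_ord_recr /= -IH.
have -> : (N.+1 * T = N * T + T)%N by rewrite mulSnr.
by rewrite big_split_ord.
Qed.

Lemma conv_fin n (S : 'rV[R]_n -> Prop) (I : finType) (w : I -> R) (p : I -> 'rV[R]_n) :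
  (forall j, 0 <= w j) -> \sum_j w j = 1 -> (forall j, S (p j)) ->
  conv S (\sum_j w j *: p j).
Proof.
move=> w0 w1 Sp.
exists #|I|, (fun k => w (enum_val k)), (fun k => p (enum_val k)).
split => //.
- by rewrite -w1 [RHS]big_enum_val.
- by rewrite [LHS]big_enum_val.
Qed.

Lemma upayE n (A : 'I_n -> finType) (u : 'I_n -> profile A -> R) m
  (f : {ffun 'I_m -> profile A}) i s (hm : (0 < m)%N) :
  upay u f i s = u i (f (Ordinal (ltn_pmod s hm))).
Proof.
rewrite /upay; case: insubP => [j _ hj|] /=.
  by do 2 f_equal; apply: val_inj; rewrite /= hj.
by rewrite ltn_pmod.
Qed.

End Aux.

Lemma lt_aux (y n T r : nat) : (y < n)%N -> (r < T)%N -> (y * T + r < n * T)%N.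
Proof. move=> h1 h2; nia. Qed.

Lemma mod_aux (i k n T r : nat) : (0 < n)%N -> (r < T)%N ->
  ((i * T + (k * T + r)) %% (n * T) = (i + k) %% n * T + r)%N.
Proof.
move=> hn hr; rewrite addnA -mulnDl.
set x := (i + k)%N.
rewrite {1}(divn_eq x n) mulnDl -mulnA -addnA modnMDl modn_small //.
by apply: lt_aux => //; rewrite ltn_pmod.
Qed.

Section Main.
Variables (R : realType) (n : nat) (A : 'I_n -> finType) (u : 'I_n -> profile A -> R).
Variables (delta : R) (T : nat).
Hypothesis hn : (0 < n)%N.
Hypothesis hT : (0 < T)%N.
Hypothesis hd0 : 0 < delta.

Lemma idx_lt (j : 'I_n) (r : 'I_T) : (j * T + r < n * T)%N.
Proof. exact: lt_aux. Qed.

Definition idx (j : 'I_n) (r : 'I_T) : 'I_(n * T) := Ordinal (idx_lt j r).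

Definition bvec (a : {ffun 'I_(n * T) -> profile A}) (r : 'I_T) : {ffun 'I_n -> profile A} :=
  [ffun j => a (idx j r)].

Lemma hnT : (0 < n * T)%N.
Proof. by rewrite muln_gt0 hn hT. Qed.

Lemma upay_b a (i : 'I_n) k (r : 'I_T) :
  upay u a i (i * T + (k * T + r)) = upay u (bvec a r) i (i + k).
Proof.
rewrite (@upayE _ _ _ _ _ _ _ _ hnT) (@upayE _ _ _ _ _ _ _ _ hn) ffunE; congr (u i (a _)).
by apply: val_inj; rewrite /= mod_aux.
Qed.


Definition ST := \sum_(r < T) delta ^+ r.
Definition Sn := \sum_(k < n) delta ^+ (k * T).

Lemma ST_gt0 : 0 < ST.
Proof.
rewrite /ST; case: T hT => // T' _.
rewrite big_ord_recl expr0; apply: ltr_pwDl => //.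
by apply: sumr_ge0 => j _; rewrite exprn_ge0 // ltW.
Qed.

Lemma Sn_gt0 : 0 < Sn.
Proof.
rewrite /Sn -(prednK hn) big_ord_recl mul0n expr0; apply: ltr_pwDl => //.
by apply: sumr_ge0 => j _; rewrite exprn_ge0 // ltW.
Qed.

Lemma Ui_split a (i : 'I_n) : Ui u delta a i =
  \sum_(r < T) (delta ^+ r / ST) * vi u delta T (bvec a r) i.
Proof.
rewrite /Ui /vi.
rewrite (@sum_split R n T (fun k => delta ^+ k)).
rewrite (@sum_split R n T (fun k => delta ^+ k * upay u a i (i * T + k))).
have -> : \sum_(k' < n) \sum_(r < T) delta ^+ (k' * T + r) = Sn * ST.
  rewrite /Sn /ST big_distrl; apply: eq_bigr => k _.
  by rewrite big_distrr; apply: eq_bigr => r _; rewrite exprD.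
rewrite exchange_big mulr_sumr; apply: eq_bigr => r _.
have -> : \sum_(i0 < n) delta ^+ (i0 * T + r) * upay u a i (i * T + (i0 * T + r)) =
   delta ^+ r * \sum_(k < n) delta ^+ (k * T) * upay u (bvec a r) i (i + k).
  rewrite mulr_sumr; apply: eq_bigr => k _.
  by rewrite upay_b exprD; ring.
rewrite -/Sn invfM; ring.
Qed.

Lemma Uvec_split a : Uvec u delta a =
  \sum_(r < T) (delta ^+ r / ST) *: vvec u delta T (bvec a r).
Proof.
apply/rowP => i; rewrite !mxE summxE Ui_split.
by apply: eq_bigr => r _; rewrite !mxE.
Qed.

End Main.

Lemma csum (R : realType) (delta : R) T : (0 < T)%N -> 0 < delta ->
  \sum_(r < T) delta ^+ r / ST R delta T = 1.
Proof.
move=> hT hd; rewrite -mulr_suml divff //.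
by rewrite gt_eqF // ST_gt0.
Qed.

Lemma div_lt (n T : nat) (k : 'I_(n * T)) : (0 < T)%N -> (k %/ T < n)%N.
Proof. by move=> hT; rewrite ltn_divLR. Qed.

Definition abig (n : nat) (A : 'I_n -> finType) (T : nat) (hT : (0 < T)%N)
  (b : {ffun 'I_n -> profile A}) : {ffun 'I_(n * T) -> profile A} :=
  [ffun k : 'I_(n * T) => b (Ordinal (@div_lt n T k hT))].
Arguments abig {n A T} hT b.

Lemma bvec_abig n (A : 'I_n -> finType) T (hT : (0 < T)%N) b (r : 'I_T) :
  bvec n A T (abig hT b) r = b.
Proof.
apply/ffunP => j; rewrite !ffunE; congr (b _); apply: val_inj => /=.
by rewrite divnMDl // divn_small // addn0.
Qed.

Lemma Uvec_abig (R : realType) n (A : 'I_n -> finType) (u : 'I_n -> profile A -> R) (delta : R) T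
  (hn : (0 < n)%N) (hT : (0 < T)%N) (hd : 0 < delta) b :
  Uvec u delta (abig hT b) = vvec u delta T b.
Proof.
rewrite (Uvec_split _ _ _ _ _ _ hn hT).
under eq_bigr do rewrite bvec_abig.
by rewrite -scaler_suml csum // scale1r.
Qed.

Theorem theorem1 (R : realType) (n : nat) (hn : (2 <= n)%N)
  (A : 'I_n -> finType) (hA : forall i, (0 < #|A i|)%N)
  (u : 'I_n -> profile A -> R)
  (delta : R) (hd0 : 0 < delta) (hd1 : delta <= 1)
  (T : nat) (hT : (0 < T)%N) :
  forall x : 'rV[R]_n,
    Fset u delta T x <->
    conv (fun y => exists a : {ffun 'I_n -> profile A}, y = vvec u delta T a) x.
Proof.
have hn' : (0 < n)%N by apply: ltnW.
move=> x; split.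
- case=> m [w [p [w0 w1 Sp ->]]].
  have [af haf] := fin_all_exists Sp.
  have -> : \sum_j w j *: p j = \sum_j \sum_(r < T)
      (w j * (delta ^+ r / ST R delta T)) *: vvec u delta T (bvec n A T (af j) r).
    apply: eq_bigr => j _; rewrite haf (Uvec_split _ _ _ _ _ _ hn' hT) scaler_sumr.
    by apply: eq_bigr => r _; rewrite scalerA.
  rewrite pair_bigA /=.
  apply: (@conv_fin R n _ _ (fun q : 'I_m * 'I_T => w q.1 * (delta ^+ q.2 / ST R delta T))
    (fun q : 'I_m * 'I_T => vvec u delta T (bvec n A T (af q.1) q.2))).
  + move=> q; apply: mulr_ge0 => //; apply: divr_ge0; first by rewrite exprn_ge0 // ltW.
    by rewrite ltW // ST_gt0.
  + rewrite -(pair_bigA _ (fun (j : 'I_m) (r : 'I_T) => w j * (delta ^+ r / ST R delta T))) /=.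
    rewrite -w1; apply: eq_bigr => j _.
    by rewrite -mulr_sumr csum // mulr1.
  + by move=> q; eexists.
- case=> m [w [p [w0 w1 Sp ->]]].
  have [bf hbf] := fin_all_exists Sp.
  exists m, w, (fun j => Uvec u delta (abig hT (bf j))); split => //.
  + by move=> j; eexists.
  + by apply: eq_bigr => j _; rewrite hbf Uvec_abig.
Qed.
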